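(* In the setting below, the rank of the free abelian group $\bar A_{\mathfrak{ab}}/\bar\rho_{\mathfrak{ab}}(\bar G_{\mathfrak{ab}})$ is $\sum_{i=1}^m|S_i|-n-m+c$, where $c$ is the number of connected components of the graph $\Lambda_{\mathcal X}$.
   Context: Let $G$ be a group generated by $a_1,\dots,a_n$ with $z=a_1\cdots a_n$ central. Let $\mathcal X=\{S_1,\dots,S_m\}$ with $S_i\subseteq\{1,\dots,n\}$ and $|S_i\cap S_r|\le1$ for $i\neq r$. For $S\subseteq\{1,\dots,n\}$ let $G_S$ be the quotient of $G$ by the normal closure of $\{a_j:j\notin S\}$; let $a_{ij}$ be the image of $a_j$ in $G_{S_i}$ and $z_i=a_{i1}\cdots a_{in}$ (central in $G_{S_i}$). Let $\bar G=G/\langle z\rangle$, $\bar G_{S_i}=G_{S_i}/\langle z_i\rangle$, and assume each $\bar G_{S_i}$ is free of rank $|S_i|-1$, the images of any $|S_i|-1$ of the $a_{ij}$, $j\in S_i$, forming a free basis. Let $A=\prod_iG_{S_i}$, $\bar A=\prod_i\bar G_{S_i}$, $\rho\colon G\to A$ the product of projections and $\bar\rho\colon\bar G\to\bar A$ the induced map. Assume $G_{\mathfrak{ab}}$ and $A_{\mathfrak{ab}}$ are free abelian with bases the images of $a_1,\dots,a_n$ and of $a_{ij}$ ($1\le i\le m$, $j\in S_i$) respectively; $\mathfrak{ab}$ denotes abelianization. $\Lambda_{\mathcal X}$ is the bipartite graph with vertex set $\{S_1,\dots,S_m\}\sqcup\{1,\dots,n\}$ and an edge $\{S_i,j\}$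 for each $j\in S_i$. *)

(* Defs.v *)
(* Quotients G/N are handled
   through their universal property: homomorphisms out of G/N are the
   homomorphisms out of G that kill N (and the projection G -> G/N is onto,
   so uniqueness on G/N is uniqueness on G). *)
From mathcomp Require Import all_boot.
Set Implicit Arguments.
Unset Strict Implicit.
Unset Printing Implicit Defensive.

Local Open Scope group_scope.

Section GroupDefs.
Variable G : groupType.

Definition is_subgroup (S : G -> Prop) : Prop :=
  S 1 /\ (forall x y, S x -> S y -> S (x / y)).

Definition is_normal (N : G -> Prop) : Prop :=
  is_subgroup N /\ (forall x y, N x -> N (x ^ y)).

Definition gen_sub (Y : G -> Prop) (g : G) : Prop :=
  forall S, is_subgroup S -> (forall x, Y x -> S x) -> S g.

Definition ncl (Y : G -> Prop) (g : G) : Prop :=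
  forall N, is_normal N -> (forall x, Y x -> N x) -> N g.

Definition is_central (x : G) : Prop := forall y : G, commute x y.

End GroupDefs.

Definition ghom (G H : groupType) (f : G -> H) : Prop :=
  forall x y, f (x * y) = f x * f y.

Definition kills (G H : groupType) (f : G -> H) (N : G -> Prop) : Prop :=
  forall g, N g -> f g = 1.

Definition abelian_grp (H : groupType) : Prop := forall x y : H, commute x y.

(* The images in G/N of the family (b i)_{i in P} form a free basis of the
   group G/N  (universal property of the free group on that family). *)
Definition free_basis_mod (G : groupType) (N : G -> Prop)
  (I : Type) (b : I -> G) (P : I -> bool) : Prop :=
  forall (H : groupType) (h : I -> H),
    exists f : G -> H, [/\ ghom f, kills f N, (forall i, P i -> f (b i) = h i)
      & forall f' : G -> H, ghom f' -> kills f' N ->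
          (forall i, P i -> f' (b i) = h i) -> forall g, f' g = f g].

(* The images in (G/N)_ab of the family (b i)_{i in P} form a free basis of
   the free abelian group (G/N)_ab  (universal property among abelian groups;
   homomorphisms from (G/N)_ab to an abelian H are homomorphisms G -> H
   killing N). *)
Definition free_ab_basis_mod (G : groupType) (N : G -> Prop)
  (I : Type) (b : I -> G) (P : I -> bool) : Prop :=
  forall (H : groupType) (h : I -> H), abelian_grp H ->
    exists f : G -> H, [/\ ghom f, kills f N, (forall i, P i -> f (b i) = h i)
      & forall f' : G -> H, ghom f' -> kills f' N ->
          (forall i, P i -> f' (b i) = h i) -> forall g, f' g = f g].

Section Setting.
Variables (G : groupType) (n m : nat) (a : 'I_n -> G) (X : 'I_m -> {set 'I_n}).

Definition zprod : G := \prod_(j < n) a j.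

(* kernel of G -> G_S : normal closure of {a_j : j \notin S} *)
Definition kerS (S : {set 'I_n}) : G -> Prop :=
  ncl (fun g => exists2 j, j \notin S & g = a j).

(* kernel of G -> bar G_S = G_S / <z_S> : normal closure of
   {a_j : j \notin S} together with z *)
Definition kerSbar (S : {set 'I_n}) : G -> Prop :=
  ncl (fun g => (exists2 j, j \notin S & g = a j) \/ g = zprod).

(* A = prod_i G_{S_i} is the quotient of the group {ffun 'I_m -> G} = G^m by
   the normal subgroup prod_i ker(G -> G_{S_i}) *)
Definition kerA : {ffun 'I_m -> G} -> Prop := fun x : {ffun 'I_m -> G} => forall i, kerS (X i) (x i).

(* a_{ij} : the image of a_j in the i-th factor G_{S_i} of A *)
Definition aij (ij : 'I_m * 'I_n) : {ffun 'I_m -> G} :=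
  [ffun k => if k == ij.1 then a ij.2 else 1].

(* bar A_ab / bar rho_ab(bar G_ab) is the quotient of G^m by the normal
   closure of: prod_i ker(G -> bar G_{S_i}), the commutators of G^m, and the
   diagonal image rho(G) = {(g,...,g)} (images of g in each factor). *)
Definition kerQ : {ffun 'I_m -> G} -> Prop :=
  ncl (fun x : {ffun 'I_m -> G} => [\/ forall i, kerSbar (X i) (x i),
                    exists x1 x2 : {ffun 'I_m -> G}, x = [~ x1, x2]
                  | exists g : G, x = [ffun => g]]).
End Setting.

Definition lam_rel (n m : nat) (X : 'I_m -> {set 'I_n}) : rel ('I_m + 'I_n) :=
  fun u v => match u, v with
             | inl i, inr j => j \in X i
             | inr j, inl i => j \in X i
             | _, _ => false
             end.

(* number of connected components of Lambda_X (lam_rel is symmetric, so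
   [roots] picks one representative per connected component) *)
Definition n_components (n m : nat) (X : 'I_m -> {set 'I_n}) : nat :=
  #|roots (lam_rel X)|.

(* Main.v *)
Require Import Defs.
From HB Require Import structures.
From mathcomp Require Import all_boot ssralg zify.
Set Implicit Arguments. Unset Strict Implicit. Unset Printing Implicit Defensive.
Import GRing.Theory.

Section Graph.
Variable T : finType.
Implicit Types (E F : {set T * T}).

Definition grel E : rel T := fun x y => ((x, y) \in E) || ((y, x) \in E).

Lemma grel_sym E : symmetric (grel E).
Proof. by move=> x y; rewrite /grel orbC. Qed.

Lemma csym E : connect_sym (grel E).
Proof. exact/sym_connect_sym/grel_sym. Qed.

Lemma grel_sub E F : E \subset F -> subrel (grel E) (grel F).
Proof. by move=> /subsetP sEF x y /orP[/sEF|/sEF]; rewrite /grel => ->; rewrite ?orbT. Qed.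

Lemma connect_mono E F : E \subset F -> subrel (connect (grel E)) (connect (grel F)).
Proof. by move=> sEF; apply: connect_sub => x y /(grel_sub sEF) /connect1. Qed.

Lemma card_roots_eq (e e' : rel T) : connect e =2 connect e' -> #|roots e| = #|roots e'|.
Proof. by move=> ee; apply: eq_card => x; rewrite !inE /roots /root (eq_pick (ee x)). Qed.

Section Flow.
Variable V : zmodType.
Local Open Scope ring_scope.
Implicit Types (phi psi : T * T -> V).

Definition outf E phi x := \sum_(f in E) (if f.1 == x then phi f else 0).
Definition inf E phi x := \sum_(f in E) (if f.2 == x then phi f else 0).
Definition cyc E phi := forall x, outf E phi x = inf E phi x.

Lemma outfD E phi psi x : outf E (fun g => phi g + psi g) x = outf E phi x + outf E psi x.
Proof. rewrite /outf -big_split; apply: eq_bigr => f _. case: ifP => _ //; exact/esym/addr0. Qed.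
Lemma infD E phi psi x : inf E (fun g => phi g + psi g) x = inf E phi x + inf E psi x.
Proof. rewrite /inf -big_split; apply: eq_bigr => f _; case: ifP => _ //; exact/esym/addr0. Qed.

Lemma cycD E phi psi : cyc E phi -> cyc E psi -> cyc E (fun g => phi g + psi g).
Proof. by move=> c1 c2 x; rewrite outfD infD c1 c2. Qed.


Lemma outfN E phi x : outf E (fun g => - phi g) x = - outf E phi x.
Proof. rewrite /outf -sumrN; apply: eq_bigr => f _; case: ifP => _ //; exact/esym/oppr0. Qed.
Lemma infN E phi x : inf E (fun g => - phi g) x = - inf E phi x.
Proof. rewrite /inf -sumrN; apply: eq_bigr => f _; case: ifP => _ //; exact/esym/oppr0. Qed.
Lemma cycB E phi psi : cyc E phi -> cyc E psi -> cyc E (fun g => phi g - psi g).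
Proof. by move=> c1 c2 x; rewrite outfD infD outfN infN c1 c2. Qed.

Definition dl (f : T * T) (t : V) : T * T -> V := fun g => if g == f then t else 0.

Lemma outf_dl E f t x : f \in E -> outf E (dl f t) x = t *+ (f.1 == x).
Proof.
move=> fE; rewrite /outf (bigD1 f) //= /dl eqxx big1 ?addr0.
  by case: eqP; rewrite ?mulr1n ?mulr0n.
by move=> g /andP[_ /negbTE ->]; case: ifP.
Qed.
Lemma inf_dl E f t x : f \in E -> inf E (dl f t) x = t *+ (f.2 == x).
Proof.
move=> fE; rewrite /inf (bigD1 f) //= /dl eqxx big1 ?addr0.
  by case: eqP; rewrite ?mulr1n ?mulr0n.
by move=> g /andP[_ /negbTE ->]; case: ifP.
Qed.

Fixpoint fl E (t : V) x (p : seq T) : T * T -> V :=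
  match p with
  | [::] => fun _ => 0
  | y :: q => fun g => (if (x, y) \in E then dl (x, y) t g else dl (y, x) (- t) g)
                       + fl E t y q g
  end.

Lemma fl_div E F t x p z : E \subset F -> path (grel E) x p ->
  outf F (fl E t x p) z - inf F (fl E t x p) z = t *+ (x == z) - t *+ (last x p == z).
Proof.
move=> /subsetP sEF; elim: p x => [|y p IH] x /=.
  rewrite /outf /inf !big1 ?subrr //; by move=> f _; case: ifP.
move=> /andP[exy pp].
rewrite outfD infD.
have -> : t *+ (x == z) - t *+ (last y p == z) =
  (t *+ (x == z) - t *+ (y == z)) + (t *+ (y == z) - t *+ (last y p == z)).
  by rewrite addrA subrK.
rewrite -(IH y pp) opprD addrACA; congr (_ + _).
case xyE: ((x, y) \in E).
  rewrite (outf_dl _ _ (sEF _ xyE)) (inf_dl _ _ (sEF _ xyE)) /=.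
  by [].
have yxE : (y, x) \in E by move: exy; rewrite /grel xyE.
rewrite (outf_dl _ _ (sEF _ yxE)) (inf_dl _ _ (sEF _ yxE)) /=.
by rewrite !mulNrn opprK addrC.
Qed.

Lemma fl_supp E t x p g : path (grel E) x p -> g \notin E -> fl E t x p g = 0.
Proof.
elim: p x => [|y p IH] x //= /andP[exy pp] gE.
rewrite IH // addr0; case xyE: ((x, y) \in E); rewrite /dl.
  by case: eqP => // gxy; rewrite gxy xyE in gE.
have yxE : (y, x) \in E by move: exy; rewrite /grel xyE.
by case: eqP => // gxy; rewrite gxy yxE in gE.
Qed.

Lemma outf_D1 E e phi x : e \in E ->
  outf E phi x = (if e.1 == x then phi e else 0) + outf (E :\ e) phi x.
Proof. by move=> eE; rewrite /outf (big_setD1 _ eE). Qed.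
Lemma inf_D1 E e phi x : e \in E ->
  inf E phi x = (if e.2 == x then phi e else 0) + inf (E :\ e) phi x.
Proof. by move=> eE; rewrite /inf (big_setD1 _ eE). Qed.

Lemma cyc_restr E e phi : e \in E -> phi e = 0 -> cyc E phi -> cyc (E :\ e) phi.
Proof.
move=> eE pe0 c x; move: (c x); rewrite (outf_D1 _ _ eE) (inf_D1 _ _ eE) pe0.
by rewrite !if_same !add0r.
Qed.

Lemma cyc_ext E e phi : e \in E -> phi e = 0 -> cyc (E :\ e) phi -> cyc E phi.
Proof.
move=> eE pe0 c x; rewrite (outf_D1 _ _ eE) (inf_D1 _ _ eE) pe0 c.
by rewrite !if_same.
Qed.

Definition ov (e : T * T) phi : T * T -> V := fun g => if g == e then 0 else phi g.

Lemma cyc_ov E e phi : e \in E -> cyc (E :\ e) phi -> cyc E (ov e phi).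
Proof.
move=> eE c; apply: (cyc_ext eE); first by rewrite /ov eqxx.
have eqo : forall x, outf (E :\ e) (ov e phi) x = outf (E :\ e) phi x.
  move=> x; apply: eq_bigr => g; rewrite !inE => /andP[ge _].
  by rewrite /ov (negbTE ge).
have eqi : forall x, inf (E :\ e) (ov e phi) x = inf (E :\ e) phi x.
  move=> x; apply: eq_bigr => g; rewrite !inE => /andP[ge _].
  by rewrite /ov (negbTE ge).
by move=> x; rewrite eqo eqi c.
Qed.

Lemma sum_ind (K : {pred T}) (y : T) (c : V) :
  \sum_(x in K) (if y == x then c else 0) = if y \in K then c else 0.
Proof.
case: (boolP (y \in K)) => yK.
  rewrite (bigD1 y) //= eqxx big1 ?addr0 // => x /andP[_ xy].
  by rewrite eq_sym (negbTE xy).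
by apply: big1 => x xK; case: eqP => // yx; rewrite yx xK in yK.
Qed.

Lemma bridge E e phi : e \in E -> ~~ connect (grel (E :\ e)) e.2 e.1 ->
  cyc E phi -> phi e = 0.
Proof.
move=> eE nc c.
set K := connect (grel (E :\ e)) e.1.
have : \sum_(x in K) outf E phi x = \sum_(x in K) inf E phi x.
  by apply: eq_bigr => x _; apply: c.
rewrite /outf /inf exchange_big [X in _ = X -> _]exchange_big /=.
under eq_bigr do rewrite sum_ind.
under [X in _ = X -> _]eq_bigr do rewrite sum_ind.
rewrite !(big_setD1 _ eE) /=.
have -> : \sum_(f in E :\ e) (if f.1 \in K then phi f else 0) =
          \sum_(f in E :\ e) (if f.2 \in K then phi f else 0).
  apply: eq_bigr => f fE; congr (if _ then _ else _).
  rewrite /K !inE; apply: (same_connect_r (csym _)).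
  by apply: connect1; rewrite /grel -surjective_pairing fE.
have -> : e.1 \in K by rewrite /K inE connect0.
have -> : e.2 \in K = false.
  by apply/negbTE; rewrite /K inE (csym (E :\ e)).
rewrite add0r; set S := (\sum_(f in E :\ e) _) => h.
by move: (congr1 (fun v => v - S) h); rewrite /= addrK subrr.
Qed.
End Flow.

Lemma roots_empty : #|roots (grel set0)| = #|T|.
Proof.
apply: eq_card => x; rewrite !inE /roots.
have : connect (grel set0) x (root (grel set0) x) by apply: connect_root.
case/connectP => [[|y p]] /=; first by move=> _ /= ->; rewrite eqxx.
by rewrite /grel !inE.
Qed.

Lemma grel_D1 E e x y : e \in E -> grel E x y ->
  [\/ grel (E :\ e) x y, (x, y) = e | (y, x) = e].
Proof.
move=> eE; rewrite /grel !inE.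
case: (boolP ((x, y) == e)) => [/eqP -> _|nxy]; first by constructor 2.
case: (boolP ((y, x) == e)) => [/eqP -> _|nyx]; first by constructor 3.
by move=> h; constructor 1.
Qed.

Lemma connect_add E e : e \in E -> connect (grel (E :\ e)) e.2 e.1 ->
  connect (grel E) =2 connect (grel (E :\ e)).
Proof.
move=> eE c21.
have sub : subrel (connect (grel E)) (connect (grel (E :\ e))).
  apply: connect_sub => x y /(grel_D1 eE) [h|h|h]; first exact: connect1.
    by subst e; rewrite (csym _).
  by subst e.
move=> x y; apply/idP/idP; first exact: sub.
by apply: connect_mono; apply: subsetDl.
Qed.

Lemma connect_split E e x y : e \in E -> connect (grel E) x y ->
  [|| connect (grel (E :\ e)) x y,
      connect (grel (E :\ e)) x e.1 && connect (grel (E :\ e)) e.2 y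
    | connect (grel (E :\ e)) x e.2 && connect (grel (E :\ e)) e.1 y].
Proof.
move=> eE /connectP[p pp ->]; set c := connect (grel (E :\ e)).
have c0 : forall z, c z z by move=> z; apply: connect0.
have ctr : forall a b d, c a b -> c b d -> c a d.
  by move=> a b d; apply: connect_trans.
have cs := csym (E :\ e).

elim/last_ind: p pp => [|p z IH]; first by rewrite /= c0.
rewrite rcons_path last_rcons => /andP[pp ez]; have := IH pp.
set y' := last x p in ez *.
case/(grel_D1 eE): ez => [g|h|h].
  have cyz : c y' z by apply: connect1.
  case/or3P => [h|/andP[h1 h2]|/andP[h1 h2]].
  - by rewrite (ctr _ _ _ h cyz).
  - by rewrite h1 (ctr _ _ _ h2 cyz) orbT.
  - by rewrite h1 (ctr _ _ _ h2 cyz) !orbT.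
- have [-> ->] : y' = e.1 /\ z = e.2 by rewrite -h.
  case/or3P => [h'|/andP[h1 h2]|/andP[h1 h2]].
  + by rewrite h' c0 orbT.
  + by rewrite h1 c0 orbT.
  + by rewrite h1.
- have [-> ->] : y' = e.2 /\ z = e.1 by rewrite -h.
  case/or3P => [h'|/andP[h1 h2]|/andP[h1 h2]].
  + by rewrite h' c0 !orbT.
  + by rewrite h1.
  + by rewrite h1 c0 !orbT.
Qed.

Lemma bridge_count E e : e \in E -> ~~ connect (grel (E :\ e)) e.2 e.1 ->
  #|roots (grel (E :\ e))| = (#|roots (grel E)|).+1.
Proof.
move=> eE nc.
set c' := grel (E :\ e); set c := grel E.
have cs' := csym (E :\ e); have cs := csym E.
have mono : forall x y, connect c' x y -> connect c x y.
  by move=> x y; apply: connect_mono; apply: subsetDl.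
have ce : connect c e.1 e.2.
  by apply: connect1; rewrite /c /grel -surjective_pairing eE.
set A := [set x | roots c' x].
set ru := root c' e.1; set rv := root c' e.2.
have rvA : rv \in A by rewrite inE roots_root.
have ruA : ru \in A by rewrite inE roots_root.
have nuv : ru != rv.
  apply/negP => /eqP /(rootP cs') h; move: nc; rewrite cs' h //.
have -> : #|roots c'| = #|A| by rewrite cardsE.
rewrite (cardsD1 rv) rvA add1n; congr _.+1.
set A' := A :\ rv.
have rootsA : forall x, roots c' x -> root c' x = x by move=> x /eqP.
have <- : #|root c @: A'| = #|A'|.
  apply: card_in_imset => x y; rewrite !inE => /andP[xv xA] /andP[yv yA].
  move=> /(rootP cs) cxy.
  have := connect_split eE cxy => /= /or3P [h|/andP[h1 h2]|/andP[h1 h2]].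
  - by rewrite -(rootsA _ xA) -(rootsA _ yA); apply/(rootP cs').
  - exfalso; move/negP: yv; apply; rewrite -(rootsA _ yA); apply/eqP/(rootP cs').
    by rewrite cs'.
  - exfalso; move/negP: xv; apply; rewrite -(rootsA _ xA); apply/eqP/(rootP cs').
    by [].
apply: eq_card => y; rewrite !inE; apply/imsetP/idP.
  by case=> x _ ->; apply: roots_root.
move=> /eqP ry.
have cyr : connect c y (root c' y) by apply: mono; apply: connect_root.
case: (eqVneq (root c' y) rv) => hv.
  exists ru; first by rewrite !inE nuv; exact: roots_root.
  rewrite -ry; apply/(rootP cs).
  apply: (connect_trans cyr); rewrite hv.
  apply: (connect_trans (y := e.2)); first by rewrite cs; apply: mono; apply: connect_root.
  apply: (connect_trans (y := e.1)); first by rewrite cs.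
  by apply: mono; apply: connect_root.
exists (root c' y); first by rewrite !inE hv; exact: roots_root.
by rewrite -{1}ry; apply/(rootP cs).
Qed.

Lemma cycle_basis E : exists R : {set T * T}, [/\ R \subset E,
  (#|R| + #|T| = #|E| + #|roots (grel E)|)%N &
  forall V : zmodType,
    (forall w : T * T -> V, exists phi, cyc E phi /\ {in R, forall g, phi g = w g})
    /\ (forall phi : T * T -> V, cyc E phi -> {in R, forall g, phi g = 0%R} ->
          {in E, forall g, phi g = 0%R})].
Proof.
move: {2}#|E| (erefl #|E|) => k; elim: k E => [|k IH] E hk.
  have E0 : E = set0 by apply/cards0_eq.
  subst E; exists set0; split => //; first by rewrite cards0 roots_empty.
  move=> V; split.
    move=> w; exists (fun _ => 0%R); split; last by move=> g; rewrite inE.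
    by move=> x; rewrite /outf /inf !big_set0.
  by move=> phi _ _ g; rewrite inE.
have [e eE] : exists e, e \in E by apply/set0Pn; rewrite -cards_eq0 hk.
have hk' : #|E :\ e| = k by move: hk; rewrite (cardsD1 e) eE add1n => -[].
have [R' [sR' cnt' P']] := IH _ hk'.
have eR' : e \notin R' by apply/negP => /(subsetP sR'); rewrite !inE eqxx.
have sE'E : E :\ e \subset E := subsetDl _ _.
have eE' : e \notin E :\ e by rewrite !inE eqxx.
case: (boolP (connect (grel (E :\ e)) e.2 e.1)) => cvu.
  exists (e |: R'); split.
  - by rewrite subUset sub1set eE (subset_trans sR' sE'E).
  - rewrite cardsU1 eR' (card_roots_eq (connect_add eE cvu)) (cardsD1 e E) eE.
    by rewrite add1n !addSn cnt'.
  move=> V; have [Pex Pun] := P' V; split.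
    move=> w; case/connectP: (cvu) => p pp plast; set t := w e.
    pose psi := fun g => (fl (E :\ e) t e.2 p g + dl e t g)%R.
    have [phi' [c' agr]] := Pex (fun g => w g - psi g)%R.
    exists (fun g => ov e phi' g + psi g)%R; split.
      apply: cycD; first exact: cyc_ov.
      move=> z; apply/eqP; rewrite -subr_eq0 /psi outfD infD opprD addrACA.
      rewrite (@fl_div V (E :\ e) E t e.2 p z sE'E pp) (outf_dl _ _ eE) (inf_dl _ _ eE) -plast.
      by rewrite addrA subrK subrr.
    move=> g; rewrite !inE => /orP[/eqP -> | gR].
      by rewrite /ov eqxx add0r /psi fl_supp // add0r /dl eqxx.
    have gne : g != e by apply: contraNneq eR' => <-.
    by rewrite /ov (negbTE gne) agr // subrK.
  move=> phi cphi z0 g gE.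
  have pe : phi e = 0%R by apply: z0; rewrite !inE eqxx.
  have c' := cyc_restr eE pe cphi.
  have z0' : {in R', forall g, phi g = 0%R}.
    by move=> g' gR; apply: z0; rewrite !inE gR orbT.
  case: (eqVneq g e) => [-> // | gne]; apply: (Pun phi c' z0').
  by rewrite !inE gne gE.
exists R'; split.
- exact: subset_trans sR' sE'E.
- move: cnt'; rewrite (cardsD1 e E) eE (bridge_count eE cvu); lia.
move=> V; have [Pex Pun] := P' V; split.
  move=> w; have [phi' [c' agr]] := Pex w; exists (ov e phi'); split.
    exact: cyc_ov.
  move=> g gR; have gne : g != e by apply: contraNneq eR' => <-.
  by rewrite /ov (negbTE gne) agr.
move=> phi cphi z0 g gE.
have pe := bridge eE cvu cphi.
have c' := cyc_restr eE pe cphi.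
case: (eqVneq g e) => [-> // | gne]; apply: (Pun phi c' z0).
by rewrite !inE gne gE.
Qed.
End Graph.

Local Open Scope group_scope.

Lemma fin_choice (k : nat) (A : Type) (P : 'I_k -> A -> Prop) :
  (forall i, exists x, P i x) -> exists f : 'I_k -> A, forall i, P i (f i).
Proof.
elim: k P => [|k IH] P hP.
  have f0 : 'I_0 -> A by case.
  by exists f0 => -[].
have [x0 hx0] := hP ord0.
have [f hf] := IH (fun i => P (lift ord0 i)) (fun i => hP _).
exists (fun i => match unlift ord0 i with Some j => f j | None => x0 end) => i.
by case: unliftP => [j ->|->].
Qed.

Section GM.
Variables (G : groupType) (m : nat).
Notation GM := {ffun 'I_m -> G}.

Lemma mulfE (x y : GM) k : (x * y) k = x k * y k.
Proof. by rewrite ffunE. Qed.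
Lemma onefE k : (1 : GM) k = 1.
Proof. by rewrite ffunE. Qed.

Definition incl (i : 'I_m) (g : G) : GM := [ffun k => if k == i then g else 1].

Lemma inclM i : {morph incl i : x y / x * y}.
Proof. by move=> x y; apply/ffunP => k; rewrite mulfE !ffunE; case: ifP; rewrite ?mulg1. Qed.
Lemma incl1 i : incl i 1 = 1.
Proof. by apply/ffunP => k; rewrite !ffunE; case: ifP. Qed.

Lemma prodfE I (r : seq I) (P : pred I) (F : I -> GM) k :
  (\prod_(i <- r | P i) F i) k = \prod_(i <- r | P i) F i k.
Proof. exact: (big_morph (fun x : GM => x k) (fun x y => mulfE x y k) (onefE k)). Qed.

Lemma decomp (x : GM) : x = \prod_(i < m) incl i (x i).
Proof.
apply/ffunP => k; rewrite prodfE.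
under eq_bigr do rewrite ffunE.
rewrite -big_mkcond (big_pred1 k) // => i; exact: eq_sym.
Qed.
End GM.

Section Edges.
Variables (n m : nat) (X : 'I_m -> {set 'I_n}).
Local Notation VT := ('I_m + 'I_n)%type.
Definition edgeb (f : VT * VT) : bool :=
  match f with (inl i, inr j) => j \in X i | _ => false end.
Definition Ed : {set VT * VT} := [set f | edgeb f].

Lemma lam_grel : lam_rel X =2 grel Ed.
Proof. by move=> [i|j] [i'|j']; rewrite /lam_rel /grel !inE /= ?orbF. Qed.

Lemma sum_Ed (R : Type) (idx : R) (op : Monoid.com_law idx) (F : VT * VT -> R) :
  \big[op/idx]_(f in Ed) F f = \big[op/idx]_(i < m) \big[op/idx]_(j in X i) F (inl i, inr j).
Proof.
rewrite big_mkcond (eq_bigr (fun f => (fun u v => if (u, v) \in Ed then F (u, v) else idx) f.1 f.2)); last by case.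
apply: etrans; first exact: (esym (pair_bigA op (fun u v : VT => if (u, v) \in Ed then F (u, v) else idx))).
rewrite /=.
rewrite big_sumType /= [X in op _ X]big1 ?Monoid.mulm1; last first.
  by move=> j _; rewrite big1 // => v _; rewrite inE; case: v.
apply: eq_bigr => i _; rewrite big_sumType /= big1 ?Monoid.mul1m; last first.
  by move=> i' _; rewrite inE.
by rewrite [RHS]big_mkcond; apply: eq_bigr => j _; rewrite inE.
Qed.

Lemma card_Ed : #|Ed| = (\sum_(i < m) #|X i|)%N.
Proof.
rewrite -sum1_card (sum_Ed (Monoid.ComLaw.clone _ _ addn _)) /=.
by apply: eq_bigr => i _; rewrite sum1_card.
Qed.

Section EdCyc.
Variable V : zmodType.
Local Open Scope ring_scope.
Implicit Types phi : VT * VT -> V.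

Lemma outf_inl phi i0 : outf Ed phi (inl i0) = \sum_(j in X i0) phi (inl i0, inr j).
Proof.
rewrite /outf sum_Ed (bigD1 i0) //= [X in _ + X]big1 ?addr0.
  by apply: eq_bigr => j _; rewrite eqxx.
move=> i ne; apply: big1 => j _ /=; case: eqP => // -[e].
by rewrite e eqxx in ne.
Qed.

Lemma outf_inr phi j0 : outf Ed phi (inr j0) = 0.
Proof. by rewrite /outf sum_Ed big1 // => i _; rewrite big1. Qed.

Lemma inf_inl phi i0 : inf Ed phi (inl i0) = 0.
Proof. by rewrite /inf sum_Ed big1 // => i _; rewrite big1. Qed.

Lemma inf_inr phi j0 : inf Ed phi (inr j0) = \sum_(i < m | j0 \in X i) phi (inl i, inr j0).
Proof.
rewrite /inf sum_Ed [RHS]big_mkcond /=; apply: eq_bigr => i _.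
case: (boolP (j0 \in X i)) => jX.
  rewrite (bigD1 j0) //= eqxx big1 ?addr0 // => j /andP[_ ne].
  by case: eqP => // -[e]; rewrite e eqxx in ne.
apply: big1 => j jX'; case: eqP => // -[e]; by rewrite -e jX' in jX.
Qed.

Lemma cycP phi : cyc Ed phi <->
  (forall i, \sum_(j in X i) phi (inl i, inr j) = 0) /\
  (forall j, \sum_(i < m | j \in X i) phi (inl i, inr j) = 0).
Proof.
split.
  move=> c; split.
    by move=> i; rewrite -outf_inl c inf_inl.
  by move=> j; rewrite -inf_inr -c outf_inr.
move=> [c1 c2] [i|j].
  by rewrite outf_inl inf_inl c1.
by rewrite outf_inr inf_inr c2.
Qed.
End EdCyc.
End Edges.

Lemma ghom1 (K H : groupType) (f : K -> H) : ghom f -> f 1 = 1.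
Proof.
move=> hf; have h := hf 1 1; rewrite mulg1 in h.
by apply: (mulgI (f 1)); rewrite -h mulg1.
Qed.

Lemma ghomV (K H : groupType) (f : K -> H) x : ghom f -> f (x^-1) = (f x)^-1.
Proof.
by move=> hf; apply: (mulgI (f x)); rewrite -hf !mulgV ghom1.
Qed.

Lemma ghom_ncl (K H : groupType) (f : K -> H) (Y : K -> Prop) : ghom f ->
  (forall y, Y y -> f y = 1) -> forall g, ncl Y g -> f g = 1.
Proof.
move=> hf hY g hg; apply: (hg (fun x => f x = 1)); last exact: hY.
split; first split.
- exact: ghom1.
- by move=> x y hx hy; rewrite hf ghomV // hx hy invg1 mulg1.
- by move=> x y hx; rewrite conjgE !hf ghomV // hx mul1g mulVg.
Qed.

Lemma ncl_in (K : groupType) (Y : K -> Prop) y : Y y -> ncl Y y.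
Proof. by move=> hy N _; apply. Qed.

Lemma ncl1 (K : groupType) (Y : K -> Prop) : ncl Y 1.
Proof. by move=> N [[]]. Qed.



Section Main.
Variables (G : groupType) (n m : nat) (a : 'I_n -> G) (X : 'I_m -> {set 'I_n}).
Hypothesis gen : forall g : G, gen_sub (fun x => exists j, x = a j) g.
Hypothesis hne : forall i : 'I_m, (0 < #|X i|)%N.
Hypothesis hfree : forall (i : 'I_m) (j0 : 'I_n), j0 \in X i ->
     free_basis_mod (kerSbar a (X i)) a (fun j => (j \in X i) && (j != j0)).
Local Notation GM := {ffun 'I_m -> G}.
Local Notation VT := ('I_m + 'I_n)%type.

Lemma ex_j0 i : exists j, j \in X i. Proof. exact/card_gt0P/hne. Qed.
Definition j0 i := xchoose (ex_j0 i).
Lemma j0P i : j0 i \in X i. Proof. exact: xchooseP. Qed.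

Definition bf (f : VT * VT) : GM :=
  match f with (inl i, inr j) => incl i (a j) | _ => 1 end.

Lemma kerQ_incl i g : kerSbar a (X i) g -> kerQ a X (incl i g).
Proof.
move=> hg; apply: ncl_in; apply: Or31 => k; rewrite ffunE.
by case: eqP => [-> //|_]; exact: ncl1.
Qed.
Lemma kerSbar_a i j : j \notin X i -> kerSbar a (X i) (a j).
Proof. by move=> jX; apply: ncl_in; left; exists j. Qed.
Lemma kerSbar_z i : kerSbar a (X i) (zprod a).
Proof. by apply: ncl_in; right. Qed.

Section Hom.
Variable H : groupType.
Hypothesis Hab : abelian_grp H.
Definition AZ : Type := H.
HB.instance Definition _ := Choice.on AZ.
Lemma AZ_addA : associative ( *%g : H -> H -> H). Proof. exact: mulgA. Qed.
Lemma AZ_addC : commutative ( *%g : H -> H -> H). Proof. exact: Hab. Qed.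
Lemma AZ_add0 : left_id (1%g:H) ( *%g : H -> H -> H). Proof. exact: mul1g. Qed.
Lemma AZ_addN : left_inverse (1%g:H) (@inv H) ( *%g : H -> H -> H). Proof. exact: mulVg. Qed.
HB.instance Definition _ := GRing.isZmodule.Build AZ AZ_addA AZ_addC AZ_add0 AZ_addN.

Lemma homsum (K : groupType) (f : K -> H) I (r : seq I) (P : pred I) (F : I -> K) :
  ghom f -> (f (\prod_(i <- r | P i) F i) : AZ) = (\sum_(i <- r | P i) (f (F i) : AZ))%R.
Proof.
move=> hf; apply: (big_morph (f : K -> AZ)); first by move=> x y; rewrite hf.
exact: ghom1.
Qed.

Lemma kill_sum (f : G -> H) i : ghom f -> kills f (kerSbar a (X i)) ->
  (\sum_(j in X i) (f (a j) : AZ) = 0)%R.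
Proof.
move=> hf kf; have := kf _ (@kerSbar_z i); rewrite /zprod.
move=> /(congr1 (fun x : H => x : AZ)); rewrite homsum // (bigID (mem (X i))) /=.
rewrite [X in (_ + X)%R]big1 ?addr0 // => j jX; apply: kf; exact: kerSbar_a.
Qed.

Variable R : {set VT * VT}.
Hypothesis sR : R \subset Ed X.
Hypothesis Pex : forall w : VT * VT -> AZ,
  exists phi, cyc (Ed X) phi /\ {in R, forall g, phi g = w g}.
Hypothesis Pun : forall phi : VT * VT -> AZ, cyc (Ed X) phi ->
  {in R, forall g, phi g = 0%R} -> {in Ed X, forall g, phi g = 0%R}.

Definition bR (k : 'I_#|R|) : GM := bf (enum_val k).

Lemma partA (h : 'I_#|R| -> H) : exists f : GM -> H,
  [/\ ghom f, kills f (kerQ a X), (forall k, f (bR k) = h k) &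
     forall f' : GM -> H, ghom f' -> kills f' (kerQ a X) ->
       (forall k, f' (bR k) = h k) -> forall g, f' g = f g].
Proof.
pose w : VT * VT -> AZ := fun f =>
  if [pick k | enum_val k == f] is Some k then (h k : AZ) else 0%R.
have wE : forall k, w (enum_val k) = h k.
  move=> k; rewrite /w; case: pickP => [k' /eqP/enum_val_inj -> // | /(_ k)].
  by rewrite eqxx.
have [phi [cphi agr]] := Pex w.
have [c1 c2] := (cycP X phi).1 cphi.
have : forall i, exists Fi : G -> H, [/\ ghom Fi, kills Fi (kerSbar a (X i)),
    (forall j, (j \in X i) && (j != j0 i) -> Fi (a j) = (phi (inl i, inr j) : H)) &
    forall f', ghom f' -> kills f' (kerSbar a (X i)) ->
      (forall j, (j \in X i) && (j != j0 i) -> f' (a j) = (phi (inl i, inr j) : H)) ->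
      forall g, f' g = Fi g].
  by move=> i; exact: (hfree (j0P i) (fun j => (phi (inl i, inr j) : H))).
case/fin_choice => Fs hFs.
have Fhom i : ghom (Fs i) by case: (hFs i).
have Fkil i : kills (Fs i) (kerSbar a (X i)) by case: (hFs i).
have FsA : forall i j, j \in X i -> (Fs i (a j) : AZ) = phi (inl i, inr j).
  move=> i j jX; have [_ _ val _] := hFs i.
  case: (eqVneq j (j0 i)) => [-> | ne]; last by apply: val; rewrite jX ne.
  have z0 := kill_sum (Fhom i) (Fkil i).
  move: z0 (c1 i); rewrite !(bigD1 (j0 i) (j0P i)) /=.
  rewrite [X in ((_ + X)%R = _) -> _](eq_bigr (fun j' => phi (inl i, inr j'))); last first.
    by move=> j' hj; apply: val.
  move=> h1 h2; change ((Fs i (a (j0 i)) : AZ) = phi (inl i, inr (j0 i))).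
  move/eqP: h1; move/eqP: h2; rewrite !addr_eq0 => /eqP -> /eqP ->. done.
pose Fm : GM -> H := fun x => (\sum_(i < m) (Fs i (x i) : AZ))%R.
have FmE i g : Fm (incl i g) = Fs i g.
  rewrite /Fm (bigD1 i) //= ffunE eqxx [X in (_ + X)%R]big1 ?addr0 // => i' ne.
  by rewrite ffunE (negbTE ne); apply: ghom1.
have homFm : ghom Fm.
  move=> x y; change ((Fm (x * y) : AZ) = ((Fm x : AZ) + (Fm y : AZ))%R).
  rewrite /Fm -big_split; apply: eq_bigr => i _ /=; rewrite mulfE.
  exact: Fhom.
pose psi : G -> H := fun g => (\sum_(i < m) (Fs i g : AZ))%R.
have homPsi : ghom psi.
  move=> x y; change ((psi (x * y) : AZ) = ((psi x : AZ) + (psi y : AZ))%R).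
  rewrite /psi -big_split; apply: eq_bigr => i _ /=; exact: Fhom.
have psi0 : forall g, psi g = 1.
  move=> g; refine (gen (S := fun g => psi g = 1) g _ _).
    split; first exact: ghom1.
    by move=> x y hx hy; rewrite homPsi ghomV // hx hy invg1 mulg1.
  move=> x [j ->]; change ((psi (a j) : AZ) = 0%R).
  rewrite /psi (bigID (fun i => j \in X i)) /=.
  rewrite [X in (_ + X)%R]big1 ?addr0; last first.
    by move=> i jX; apply: Fkil; exact: kerSbar_a.
  apply: etrans (c2 j); apply: eq_bigr => i jX; exact: FsA.
exists Fm; split.
- exact: homFm.
- move=> g hg; apply: (ghom_ncl homFm _ hg) => y [hy | [x1 [x2 ->]] | [g0 ->]].
  + change ((Fm y : AZ) = 0%R); rewrite /Fm big1 // => i _; exact: Fkil.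
  + rewrite /commg /conjg !homFm !ghomV //.
    by rewrite (Hab (Fm x1)) mulKg mulVg.
  + rewrite -(psi0 g0); rewrite /Fm /psi; apply: eq_bigr => i _; rewrite ffunE.
    by [].
- move=> k; rewrite /bR; have := enum_valP k; move/(subsetP sR).
  rewrite -(wE k) -agr; last exact: enum_valP.
  case: (enum_val k) => [[i|j] [i'|j']]; rewrite inE //= => jX.
  by rewrite FmE FsA.
move=> f' hf' kf' vf' x.
pose phi' : VT * VT -> AZ := fun f => f' (bf f).
have s1 : forall i, (\sum_(j in X i) phi' (inl i, inr j) = 0)%R.
  move=> i; have := kf' _ (kerQ_incl (@kerSbar_z i)).
  rewrite /zprod (big_morph (@incl G m i) (@inclM G m i) (@incl1 G m i)).
  move=> /(congr1 (fun x : H => x : AZ)); rewrite homsum // (bigID (mem (X i))) /=.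
  rewrite [X in (_ + X)%R]big1 ?addr0; last first.
    by move=> j jX; apply: kf'; apply: kerQ_incl; exact: kerSbar_a.
  by move=> h1; exact: h1.
have s2 : forall j, (\sum_(i < m | j \in X i) phi' (inl i, inr j) = 0)%R.
  move=> j; have := kf' [ffun => a j] (ncl_in (Or33 _ _ (ex_intro _ (a j) erefl))).
  rewrite {1}(decomp [ffun => a j]).
  move=> /(congr1 (fun x : H => x : AZ)); rewrite homsum // (bigID (fun i => j \in X i)) /=.
  rewrite [X in (_ + X)%R]big1 ?addr0; last first.
    by move=> i jX; rewrite ffunE; apply: kf'; apply: kerQ_incl; exact: kerSbar_a.
  move=> h1; apply: etrans h1; apply: eq_bigr => i _; rewrite ffunE.
  by [].
have cphi' : cyc (Ed X) phi' by apply/(cycP X phi'); split.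
pose d := fun g => (phi' g - phi g)%R.
have cd : cyc (Ed X) d := cycB cphi' cphi.
have d0 : {in R, forall g, d g = 0%R}.
  move=> g gR; have [k ->] : exists k : 'I_#|R|, g = enum_val k.
    by exists (enum_rank_in gR g); rewrite enum_rankK_in.
  change ((f' (bR k) : AZ) - phi (enum_val k) = 0)%R.
  by rewrite vf' (agr _ (enum_valP k)) wE subrr.
have eqphi : {in Ed X, forall g, phi' g = phi g}.
  move=> g gE; apply/eqP; rewrite -subr_eq0; apply/eqP; exact: (Pun cd d0 gE).
have hi : forall i g, f' (incl i g) = Fs i g.
  move=> i; have [_ _ _ un] := hFs i; apply: un.
  - by move=> y z; rewrite (@inclM G m i) hf'.
  - by move=> g hg; apply: kf'; apply: kerQ_incl.
  - move=> j /andP[jX _].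
    change ((phi' (inl i, inr j) : H) = phi (inl i, inr j)).
    by rewrite eqphi // inE.
change ((f' x : AZ) = \sum_(i < m) (Fs i (x i) : AZ))%R.
rewrite {1}(decomp x) homsum //; apply: eq_bigr => i _; exact: hi.
Qed.
End Hom.
End Main.

Theorem mainTheorem15 (G : groupType) (n m : nat) (a : 'I_n -> G)
    (X : 'I_m -> {set 'I_n}) :
  (forall g : G, gen_sub (fun x => exists j, x = a j) g) ->
  is_central (zprod a) ->
  (forall i r : 'I_m, i != r -> (#|X i :&: X r| <= 1)%N) ->
  (forall i : 'I_m, (0 < #|X i|)%N) ->
  (forall (i : 'I_m) (j0 : 'I_n), j0 \in X i ->
     free_basis_mod (kerSbar a (X i)) a (fun j => (j \in X i) && (j != j0))) ->
  free_ab_basis_mod (fun g : G => g = 1) a (fun _ => true) ->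
  free_ab_basis_mod (kerA a X) (aij a) (fun ij => ij.2 \in X ij.1) ->
  exists r : nat,
    (r + n + m = \sum_(i < m) #|X i| + n_components X)%N /\
    exists b : 'I_r -> {ffun 'I_m -> G},
      free_ab_basis_mod (kerQ a X) b (fun _ => true).
Proof.
move=> gen _ _ hne hfree _ _.
have [R [sR cnt PV]] := cycle_basis (Ed X).
exists #|R|; split.
  have -> : n_components X = #|roots (grel (Ed X))|.
    by apply: eq_card => x; rewrite !inE (eq_roots (@lam_grel n m X)).
  move: cnt; rewrite card_sum !card_ord card_Ed; lia.
exists (bR a (R := R)).
move=> H h Hab.
have [f [hf kf vf un]] := partA (Hab := Hab) gen hne hfree sR (proj1 (PV _)) (proj2 (PV _)) h.
exists f; split; [exact: hf | exact: kf | by move=> k _; exact: vf | ].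
move=> f' hf' kf' vf' g; apply: un => // k; exact: vf'.
Qed.
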